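(* For every $n\geq 1$, $\operatorname{diam}(\mathrm{CIM}_n)\leq 2n-2$.
   Context: For a directed acyclic graph (DAG) $\mathcal{G}$ on vertex set $[n]=\{1,\dots,n\}$, the characteristic imset $c_\mathcal{G}$ is the 0/1-vector indexed by the subsets $S\subseteq[n]$ with $|S|\geq 2$, with $c_\mathcal{G}(S)=1$ if there exists $i\in S$ such that $S\subseteq \mathrm{pa}_\mathcal{G}(i)\cup\{i\}$ (where $\mathrm{pa}_\mathcal{G}(i)$ is the set of parents of $i$), and $c_\mathcal{G}(S)=0$ otherwise. The characteristic imset polytope is $\mathrm{CIM}_n=\operatorname{conv}(c_\mathcal{G}\colon \mathcal{G}\text{ a DAG on }[n])$. For a polytope $P$, the vertex-edge graph $G(P)$ has the vertices of $P$ as nodes, with two vertices adjacent iff their convex hull is an edge of $P$; $\operatorname{diam}(P)$ is the maximum over pairs of vertices of the length of a shortest path between them in $G(P)$. *)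

(* Defs.v *)
From HB Require Import structures.
From mathcomp Require Import all_boot all_order all_algebra.
From mathcomp Require Import reals.
Set Implicit Arguments. Unset Strict Implicit. Unset Printing Implicit Defensive.
Import Order.TTheory GRing.Theory Num.Theory.
Local Open Scope ring_scope.

(* A directed graph on 'I_n is its set of arcs E; (i, j) \in E means i -> j. *)
Definition arc_rel (n : nat) (E : {set 'I_n * 'I_n}) : rel 'I_n :=
  fun a b => (a, b) \in E.

(* acyclic: no directed cycle, i.e. no arc i -> j with a directed path j ~> i
   (this also excludes loops). *)
Definition acyclic (n : nat) (E : {set 'I_n * 'I_n}) : Prop :=
  forall i j : 'I_n, (i, j) \in E -> ~~ connect (arc_rel E) j i.

Definition parents (n : nat) (E : {set 'I_n * 'I_n}) (i : 'I_n) : {set 'I_n} :=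
  [set j | (j, i) \in E].

Notation coord n := {S : {set 'I_n} | (2 <= #|S|)%N}.

Definition char_imset (R : realType) (n : nat) (E : {set 'I_n * 'I_n})
  : {ffun coord n -> R} :=
  [ffun S : coord n =>
     if [exists i : 'I_n, (i \in val S) && (val S \subset parents E i :|: [set i])]
     then 1 else 0].

(* the (finite) generating point set of CIM_n *)
Definition cim_points (R : realType) (n : nat) (x : {ffun coord n -> R}) : Prop :=
  exists E : {set 'I_n * 'I_n}, acyclic E /\ x = char_imset R E.

Section Polytope.
Variables (R : realType) (I : finType).
Implicit Types (V : {ffun I -> R} -> Prop) (u v x w : {ffun I -> R}).

Definition dotp w x : R := \sum_(i : I) w i * x i.

(* u is a vertex of conv(V): u is the unique maximizer over V of some
   linear functional (then u is the unique maximizer over conv V). *)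
Definition is_vertex V u : Prop :=
  V u /\ exists w, forall x, V x -> x <> u -> dotp w x < dotp w u.

Definition in_segment u v x : Prop :=
  exists t : R, 0 <= t <= 1 /\ forall i, x i = (1 - t) * u i + t * v i.

(* conv{u,v} is an edge of conv(V): u, v distinct vertices and conv{u,v} is the
   face of conv(V) cut out by some linear functional w, i.e. u, v maximize w
   over V and every maximizer in V lies on the segment [u,v]. *)
Definition is_edge V u v : Prop :=
  [/\ is_vertex V u, is_vertex V v, u <> v &
   exists w, [/\ forall x, V x -> dotp w x <= dotp w u,
                 dotp w v = dotp w u &
                 forall x, V x -> dotp w x = dotp w u -> in_segment u v x]].
End Polytope.

Fixpoint ppath (T : Type) (e : T -> T -> Prop) (x : T) (p : seq T) : Prop :=
  if p is y :: p' then e x y /\ ppath e y p' else True.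

Definition dist_le (T : Type) (e : T -> T -> Prop) (u v : T) (k : nat) : Prop :=
  exists p : seq T, [/\ (size p <= k)%N, ppath e u p & last u p = v].

Definition diam_le (R : realType) (I : finType) (V : {ffun I -> R} -> Prop)
  (k : nat) : Prop :=
  forall u v, is_vertex V u -> is_vertex V v -> dist_le (is_edge V) u v k.

(* Main.v *)
Require Import Defs.
From mathcomp Require Import all_boot all_order all_algebra.
From mathcomp Require Import reals.
From mathcomp Require Import zify ring lra.
Set Implicit Arguments. Unset Strict Implicit. Unset Printing Implicit Defensive.
Import Order.TTheory GRing.Theory Num.Theory.
Local Open Scope ring_scope.

Lemma ppath_cat (T : Type) (e : T -> T -> Prop) x p q :
  ppath e x (p ++ q) <-> ppath e x p /\ ppath e (last x p) q.
Proof.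
elim: p x => [|y p IH] x /=; first by split=> [H|[]].
rewrite IH; tauto.
Qed.

Lemma ppath_rcons (T : Type) (e : T -> T -> Prop) x p y :
  ppath e x (rcons p y) <-> ppath e x p /\ e (last x p) y.
Proof. by rewrite -cats1 ppath_cat /=; tauto. Qed.

Lemma arith1 (a b c : nat) : (1 < a)%N -> (b < a)%N -> (c <= b.-1)%N -> (c < a.-1)%N.
Proof. rewrite -!subn1; lia. Qed.

Lemma arith2 (n a b c d : nat) : (a <= n)%N -> (b <= n)%N -> (c <= a.-1)%N -> (d <= b.-1)%N ->
  (c + d <= 2 * n - 2)%N.
Proof. rewrite -!subn1; lia. Qed.

Section Abs.
Variables (R : realType) (n : nat).
Local Notation crd := {S : {set 'I_n} | (2 <= #|S|)%N}.
Local Notation vec := {ffun crd -> R}.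
Variable Pt : vec -> Prop.
Hypothesis P1 : forall x, Pt x -> forall S, x S = 0 \/ x S = 1.
Hypothesis P2 : forall x, Pt x -> forall T0 : crd, x T0 = 1 ->
  exists2 j, j \in val T0 & forall S : crd, val S \subset val T0 -> j \in val S -> x S = 1.

Definition Dk (u : vec) (k : 'I_n) : {set crd} := [set S : crd | (k \in val S) && (u S == 0)].
Definition Tu (u : vec) : {set 'I_n} := [set k | Dk u k != set0].
Definition fill (i : 'I_n) (u : vec) : vec := [ffun S : crd => if i \in val S then 1 else u S].
Definition one : vec := [ffun _ => 1].

Lemma vertexP x : Pt x -> is_vertex Pt x.
Proof.
move=> Px; split => //.
exists [ffun S => 2 * x S - 1] => y Py nyx.
have [S0 hS0] : exists S, y S != x S.
  apply/existsP; apply: contraT; rewrite negb_exists => /forallP H.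
  by case: nyx; apply/ffunP => S; apply/eqP; move: (H S); rewrite negbK.
rewrite /dotp (bigD1 S0) //= [X in _ < X](bigD1 S0) //= !ffunE.
have le_rest : \sum_(i | i != S0) [ffun S => 2 * x S - 1] i * y i <=
               \sum_(i | i != S0) [ffun S => 2 * x S - 1] i * x i.
  apply: ler_sum => S _; rewrite ffunE.
  by case: (P1 Px S) => ->; case: (P1 Py S) => ->; lra.
apply: ltr_leD => //.
move: hS0; case: (P1 Px S0) => ->; case: (P1 Py S0) => -> //; rewrite ?eqxx // => _; lra.
Qed.


Lemma edge_of_w u v w : Pt u -> Pt v -> u <> v -> dotp w v = dotp w u ->
  (forall x, Pt x -> [\/ x = u, x = v | dotp w x < dotp w u]) ->
  is_edge Pt u v /\ is_edge Pt v u.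
Proof.
move=> Pu Pv nuv evu Hx.
have segu : forall a b, in_segment a b a.
  by move=> a b; exists 0; split; [rewrite lexx ler01 | move=> k; rewrite subr0 mul1r mul0r addr0].
have segv : forall a b, in_segment a b b.
  by move=> a b; exists 1; split; [rewrite ler01 lexx | move=> k; rewrite subrr mul1r mul0r add0r].
have vu := vertexP Pu; have vv := vertexP Pv.
split; split => //; try (by move=> e; apply: nuv); exists w; split => //.
all: try (by move=> x /Hx [->|->|/ltW] //; rewrite evu).
all: try (by move=> x /Hx [->|->|H] // E; rewrite ?evu E ltxx in H).
all: try (by rewrite evu).
all: try (by move=> x /Hx [->|->|H] // E; rewrite -?evu E ltxx in H).
Qed.

Lemma sub_Tu (u : vec) (S : crd) : u S = 0 -> val S \subset Tu u.
Proof.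
move=> u0; apply/subsetP => k kS; rewrite inE; apply/set0Pn; exists S.
by rewrite inE kS u0 eqxx.
Qed.

Lemma card_Tu (u : vec) k : k \in Tu u -> (2 <= #|Tu u|)%N.
Proof.
rewrite inE => /set0Pn [S]; rewrite inE => /andP [_ /eqP u0].
exact: leq_trans (valP S) (subset_leq_card (sub_Tu u0)).
Qed.

Lemma Tu_empty (u : vec) : Pt u -> Tu u = set0 -> u = one.
Proof.
move=> Pu T0; apply/ffunP => S; rewrite ffunE.
case: (P1 Pu S) => // u0.
have [k kS] : exists k, k \in val S.
  by apply/set0Pn; rewrite -card_gt0; apply: leq_trans (valP S).
by move: (subsetP (sub_Tu u0) k kS); rewrite T0 inE.
Qed.

Lemma fill_ge (u : vec) i (S : crd) : fill i u S = 0 -> u S = 0.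
Proof. by rewrite ffunE; case: ifP => // _ /eqP; rewrite oner_eq0. Qed.

Lemma Tu_fill (u : vec) i : i \in Tu u -> (#|Tu (fill i u)| < #|Tu u|)%N.
Proof.
move=> iT; apply: proper_card; apply/properP; split.
  apply/subsetP => k; rewrite !inE => /set0Pn [S]; rewrite inE => /andP [kS /eqP f0].
  by apply/set0Pn; exists S; rewrite inE kS (fill_ge f0) eqxx.
exists i => //; rewrite inE negbK; apply/eqP/setP => S; rewrite !inE ffunE.
by case: ifP => //= _; rewrite oner_eq0.
Qed.

Lemma sum_neg (I : finType) (g : I -> R) (T0 S0 : I) :
  (forall S, S != T0 -> g S <= 0) -> S0 != T0 -> g S0 + g T0 < 0 -> \sum_S g S < 0.
Proof.
move=> H n0 neg; rewrite (bigD1 T0) //= (bigD1 S0) //=.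
have : \sum_(i | (i != T0) && (i != S0)) g i <= 0.
  by apply: sumr_le0 => S /andP [/H].
lra.
Qed.


Lemma key (u : vec) i : Pt u -> Pt (fill i u) -> i \in Tu u ->
  (forall k, k \in Tu u -> (#|Dk u i| <= #|Dk u k|)%N) ->
  is_edge Pt u (fill i u) /\ is_edge Pt (fill i u) u.
Proof.
move=> Pu Pv iT Hmin.
set T := Tu u; set D := Dk u i; set v := fill i u.
have hT : (2 <= #|T|)%N := card_Tu iT.
pose Tc : crd := exist _ T hT.
have uT0 : u Tc = 0.
  case: (P1 Pu Tc) => // u1.
  have [j jT Hj] := P2 Pu u1.
  move: jT; rewrite /= inE => /set0Pn [S]; rewrite inE => /andP [jS /eqP u0].
  by move: (Hj S (sub_Tu u0) jS); rewrite u0 => /eqP; rewrite eq_sym oner_eq0.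
have TcD : Tc \in D by rewrite inE /= iT uT0 eqxx.
set d := #|D|.
have d1 : (1 <= d)%N by rewrite /d card_gt0; apply/set0Pn; exists Tc.
have d1R : 1 <= (d%:R : R) by rewrite ler1n.
pose w : vec := [ffun S => if S \in D then (if S == Tc then d%:R - 1 else -1)
                          else (if u S == 1 then d%:R else - d%:R)].
have Du0 : forall S, S \in D -> u S = 0 by move=> S; rewrite inE => /andP [_ /eqP].
have vu : forall S, v S - u S = if S \in D then 1 else 0.
  move=> S; rewrite /v ffunE inE; case: ifP => iS /=.
    by case: (P1 Pu S) => ->; rewrite ?eqxx ?oner_eq0 /=; lra.
  by rewrite subrr.
have diff : forall x, dotp w x - dotp w u = \sum_S w S * (x S - u S).
  by move=> x; rewrite /dotp -sumrB; apply: eq_bigr => S _; rewrite mulrBr.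
apply: (@edge_of_w u v w) => //.
- move=> E; move: (vu Tc); rewrite TcD -E subrr => /eqP; by rewrite eq_sym oner_eq0.
- apply/eqP; rewrite -subr_eq0 diff.
  rewrite (eq_bigr (fun S => if S \in D then w S else 0)); last first.
    by move=> S _; rewrite vu; case: ifP; rewrite ?mulr1 ?mulr0.
  rewrite -big_mkcond /= (bigD1 Tc) //= ffunE TcD eqxx.
  rewrite (eq_bigr (fun _ => -1)); last first.
    by move=> S /andP [SD /negPf nT]; rewrite ffunE SD nT.
  rewrite sumr_const.
  have -> : #|[pred S | (S \in D) && (S != Tc)]| = d.-1.
    rewrite /d (cardD1 Tc D) TcD add1n /=; by apply: eq_card => S; rewrite !inE andbC.
  have dm1 : (d.-1)%:R = d%:R - 1 :> R.
    by rewrite -{2}(prednK d1) -natr1 addrK.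
  rewrite mulNrn dm1; apply/eqP; lra.
move=> x Px.
have h01 : ((0:R) == 1) = false by rewrite eq_sym oner_eq0.
have gle : forall S, S != Tc -> w S * (x S - u S) <= 0.
  move=> S nT; rewrite ffunE (negPf nT); case: ifP => SD.
    by rewrite (Du0 _ SD); case: (P1 Px S) => ->; lra.
  by case: (P1 Pu S) => ->; case: (P1 Px S) => ->; rewrite ?eqxx ?h01 /=; lra.
have gT : w Tc * (x Tc - u Tc) <= d%:R - 1.
  by rewrite ffunE TcD eqxx uT0; case: (P1 Px Tc) => ->; lra.
have gout : forall S, S \notin D -> x S != u S -> w S * (x S - u S) = - d%:R.
  move=> S SD; rewrite ffunE (negPf SD).
  by case: (P1 Pu S) => ->; case: (P1 Px S) => ->; rewrite ?eqxx ?h01 //= => _; lra.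
have gin : forall S, S \in D -> S != Tc -> x S != u S -> w S * (x S - u S) = -1.
  move=> S SD nT; rewrite ffunE SD (negPf nT) (Du0 _ SD).
  by case: (P1 Px S) => ->; rewrite ?eqxx //= => _; lra.
case: (boolP [exists S, (S \notin D) && (x S != u S)]) => [/existsP [S0 /andP [S0D nx]] | /existsPn Hno].
  apply: Or33; rewrite -subr_lt0 diff; apply: (@sum_neg _ _ Tc S0) => //.
    by apply: contraNneq S0D => ->.
  rewrite gout //; lra.
have H : forall S, S \notin D -> x S = u S.
  by move=> S SD; move: (Hno S); rewrite SD /= negbK => /eqP.
case: (P1 Px Tc) => xT.
  case: (x =P u) => [-> | nxu]; first by apply: Or31.
  have [S1 hS1] : exists S, x S != u S.
    apply/existsP; apply: contraT; rewrite negb_exists => /forallP HH.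
    by case: nxu; apply/ffunP => S; apply/eqP; move: (HH S); rewrite negbK.
  have S1D : S1 \in D by apply: contraLR hS1; rewrite negbK => /H ->.
  have S1T : S1 != Tc by apply: contraNneq hS1 => ->; rewrite xT uT0.
  apply: Or33; rewrite -subr_lt0 diff; apply: (@sum_neg _ _ Tc S1) => //.
  by rewrite gin // ffunE TcD eqxx xT uT0; lra.
apply: Or32.
have xD : forall S, S \in D -> x S = 1.
  move=> S SD.
  have [j jT Hj] := P2 Px xT.
  case: (boolP (j \in val S)) => jS; first by apply: Hj => //; exact: sub_Tu (Du0 _ SD).
  exfalso.
  have jT' : j \in T := jT.
  have : (#|Dk u j| < #|D|)%N.
    apply: proper_card; apply/properP; split.
      apply/subsetP => S'; rewrite inE => /andP [jS' /eqP u0].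
      have xS' : x S' = 1 := Hj S' (sub_Tu u0) jS'.
      case: (boolP (S' \in D)) => // nD; move: (H S' nD); rewrite xS' u0 => /eqP.
      by rewrite oner_eq0.
    by exists S => //; rewrite inE (negPf jS).
  by rewrite ltnNge Hmin.
apply/ffunP => S; rewrite /v /fill ffunE; case: (boolP (S \in D)) => SD.
  by rewrite xD //; move: SD; rewrite inE => /andP [->].
rewrite H //; case: ifP => // iS; case: (P1 Pu S) => // u0.
by move: SD; rewrite inE iS u0 eqxx.
Qed.


Hypothesis P3 : forall x i, Pt x -> Pt (fill i x).

Lemma to_one m (u : vec) : Pt u -> (#|Tu u| <= m)%N ->
  (exists p, [/\ (size p <= (#|Tu u|).-1)%N, ppath (is_edge Pt) u p & last u p = one]) /\
  (exists q, [/\ (size q <= (#|Tu u|).-1)%N, ppath (is_edge Pt) one q & last one q = u]).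
Proof.
elim: m u => [|m IH] u Pu hm.
  have T0 : Tu u = set0 by apply/eqP; rewrite -cards_eq0; rewrite leqn0 in hm.
  by rewrite (Tu_empty Pu T0); split; exists [::].
case: (set_0Vmem (Tu u)) => [T0 | [k kT]].
  by rewrite (Tu_empty Pu T0); split; exists [::].
have [i iT Hmin] := arg_minnP (fun j => #|Dk u j|) kT.
have Pv := P3 i Pu.
have [e1 e2] := key Pu Pv iT Hmin.
have hlt := Tu_fill iT.
have h2 := card_Tu kT.
have [[p [sp pp lp]] [q [sq pq lq]]] := IH _ Pv (leq_trans (ltnSE (leq_trans hlt hm)) (leqnn m)).
split.
  exists (fill i u :: p); split => //=.
  exact: arith1 h2 hlt sp.
exists (rcons q u); split.
- by rewrite size_rcons; exact: arith1 h2 hlt sq.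
- by rewrite ppath_rcons lq.
- by rewrite last_rcons.
Qed.

End Abs.

Section Concrete.
Variables (R : realType) (n : nat).
Local Notation crd := {S : {set 'I_n} | (2 <= #|S|)%N}.

Lemma cP1 : forall x, @cim_points R n x -> forall S, x S = 0 \/ x S = 1.
Proof. by move=> x [E [_ ->]] S; rewrite ffunE; case: ifP; [right|left]. Qed.

Lemma cP2 : forall x, @cim_points R n x -> forall T0 : crd, x T0 = 1 ->
  exists2 j, j \in val T0 & forall S : crd, val S \subset val T0 -> j \in val S -> x S = 1.
Proof.
move=> x [E [_ ->]] T0; rewrite ffunE; case: ifP => [/existsP [j /andP [jT sT]] _|].
  exists j => // S sS jS; rewrite ffunE; case: ifP => // /negbT/negP H; exfalso; apply: H.
  by apply/existsP; exists j; rewrite jS (subset_trans sS sT).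
by move=> _ /eqP; rewrite eq_sym oner_eq0.
Qed.

Lemma pathE (E : {set 'I_n * 'I_n}) (i : 'I_n) :
  let E' := [set a | ((a \in E) && (a.1 != i) && (a.2 != i)) || ((a.2 == i) && (a.1 != i))] in
  forall p b, path (arc_rel E') b p -> last b p != i -> path (arc_rel E) b p.
Proof.
move=> E'; elim=> [|y p IH] b //=; case/andP => eby pth lst.
case: (y =P i) => [yi|/eqP yi].
  case: p pth lst {IH} => [|z p] /=; first by rewrite yi eqxx.
  by rewrite /arc_rel /E' yi !inE /= eqxx andbF /= andbF.
move: eby; rewrite /arc_rel /E' !inE /= (negPf yi) /= ?orbF ?andbT => /andP [-> _] /=.
exact: IH.
Qed.

Lemma cP3 : forall x i, @cim_points R n x -> @cim_points R n (fill i x).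
Proof.
move=> x i [E [acE ->]].
pose E' := [set a | ((a \in E) && (a.1 != i) && (a.2 != i)) || ((a.2 == i) && (a.1 != i))].
exists E'; split.
  move=> a b Hab; apply/negP => /connectP [p pth lst].
  move: Hab; rewrite inE /= => /orP [/andP [/andP [abE ai] bi] | /andP [/eqP bi ai]].
    have := acE a b abE; rewrite /= => /negP; apply; apply/connectP; exists p => //.
    by apply: (pathE pth); rewrite -lst.
  case: p pth lst => [|y p] /=; first by move=> _ ab; move: ai; rewrite ab bi eqxx.
  by rewrite /arc_rel /E' bi !inE /= eqxx /= !andbF.
apply/ffunP => S; rewrite /fill /char_imset !ffunE.
case: ifP => iS.
  rewrite ifT //; apply/existsP; exists i; rewrite iS /=; apply/subsetP => l _.
  rewrite !inE /=; case: (l =P i) => [->|/eqP li]; first by rewrite eqxx orbT.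
  by rewrite eqxx /= orbT.
congr (if _ then _ else _); apply: eq_existsb => k.
case kS: (k \in val S) => //=.
have ki : k != i by apply: contraFneq iS => <-.
apply/subsetP/subsetP => H l lS; move: (H l lS);
  have li : l != i by apply: contraFneq iS => <-.
  by rewrite !inE /= li ki (negPf ki) /= !andbT !orbF.
by rewrite !inE /= li ki (negPf ki) /= !andbT !orbF.
Qed.

End Concrete.


Local Close Scope ring_scope.
Unset Implicit Arguments.

Theorem mainTheorem7 (R : realType) (n : nat) :
  (1 <= n)%N -> diam_le (@cim_points R n) (2 * n - 2).
Proof.
move=> n1 u v [Pu _] [Pv _].
have bu : (#|Tu u| <= n)%N by rewrite -[X in (_ <= X)%N]card_ord max_card.
have bv : (#|Tu v| <= n)%N by rewrite -[X in (_ <= X)%N]card_ord max_card.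
have [[p [sp pp lp]] _] := to_one (@cP1 R n) (@cP2 R n) (@cP3 R n) Pu bu.
have [_ [q [sq pq lq]]] := to_one (@cP1 R n) (@cP2 R n) (@cP3 R n) Pv bv.
exists (p ++ q); split.
- by rewrite size_cat; exact: arith2 bu bv sp sq.
- by rewrite ppath_cat lp.
- by rewrite last_cat lp.
Qed.
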